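(* Let $R$ be an $n\times n$ irreducible nonnegative matrix with positive left and right eigenvectors $u$ and $v$ for the PF eigenvalue $1$. Then for every positive integer $k$, \[ \phi(R^k)\le k\cdot\phi(R). \]
   Context: For a nonnegative matrix $M$ with $Mv=v$ and $M^Tu=u$ (this holds for $M=R^k$), define $\phi_S(M)=\langle\mathbf 1_S,D_uMD_v\mathbf 1_{\overline S}\rangle/\langle\mathbf 1_S,D_uMD_v\mathbf 1\rangle$ and $\phi(M)=\min\phi_S(M)$ over nonempty $S\subseteq[n]$ with $\sum_{i\in S}u_iv_i\le\frac12\sum_iu_iv_i$; here $D_x$ is the diagonal matrix with $x$ on its diagonal and $\mathbf 1_S$ the indicator vector of $S$. *)

(* Defs.v *)
From HB Require Import structures.
From mathcomp Require Import all_boot all_order all_algebra.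
Set Implicit Arguments. Unset Strict Implicit. Unset Printing Implicit Defensive.
Import Order.TTheory GRing.Theory Num.Theory.
Local Open Scope ring_scope.

Definition nonneg_mx (R : realFieldType) (n : nat) (A : 'M[R]_n) : Prop :=
  forall i j, 0 <= A i j.

Definition irreducible_mx (R : realFieldType) (n : nat) (A : 'M[R]_n) : Prop :=
  forall i j : 'I_n, exists k : nat, 0 < (A ^+ k) i j.

Definition pos_vec (R : realFieldType) (n : nat) (x : 'cV[R]_n) : Prop :=
  forall i, 0 < x i 0.

(* phi_S(M) = <1_S, D_u M D_v 1_{S^c}> / <1_S, D_u M D_v 1> *)
Definition phiS (R : realFieldType) (n : nat) (u v : 'cV[R]_n) (M : 'M[R]_n)
    (S : {set 'I_n}) : R :=
  (\sum_(i in S) \sum_(j in ~: S) u i 0 * M i j * v j 0) /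
  (\sum_(i in S) \sum_j u i 0 * M i j * v j 0).

Definition admissible (R : realFieldType) (n : nat) (u v : 'cV[R]_n)
    (S : {set 'I_n}) : bool :=
  (S != set0) && (\sum_(i in S) u i 0 * v i 0 <= (\sum_i u i 0 * v i 0) / 2%:R).

(* phi(M) = min of phi_S(M) over admissible S (the min is attained on a finite
   nonempty family; the value 0 is only a default for the degenerate case in
   which no admissible S exists, e.g. n = 1). *)
Definition phi (R : realFieldType) (n : nat) (u v : 'cV[R]_n) (M : 'M[R]_n) : R :=
  match [pick S | admissible u v S] with
  | Some S0 => \big[Order.min/phiS u v M S0]_(S | admissible u v S) phiS u v M S
  | None => 0
  end.

(* Main.v *)
Require Import Defs.
From HB Require Import structures.
From mathcomp Require Import all_boot all_order all_algebra.
From mathcomp Require Import lra.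
Import Order.TTheory GRing.Theory Num.Theory.
Local Open Scope ring_scope.

Lemma sum_drop (R : realFieldType) (I : finType) (P : pred I) (F : I -> R) :
  (forall i, 0 <= F i) -> \sum_(i | P i) F i <= \sum_i F i.
Proof.
move=> H; rewrite [X in _ <= X](bigID P) /=.
have : 0 <= \sum_(i | ~~ P i) F i by apply: sumr_ge0.
lra.
Qed.
Arguments sum_drop {R I}.

Definition Nf (R : realFieldType) (n : nat) (u v : 'cV[R]_n) (M : 'M[R]_n)
  (S : {set 'I_n}) : R :=
  \sum_(i in S) \sum_(j in ~: S) u i 0 * M i j * v j 0.
Arguments Nf {R n}.

Lemma key (R : realFieldType) (n : nat) (A P : 'M[R]_n) (u v : 'cV[R]_n)
  (S : {set 'I_n}) :
  nonneg_mx A -> nonneg_mx P -> pos_vec u -> pos_vec v ->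
  A *m v = v -> P^T *m u = u ->
  Nf u v (P *m A) S <= Nf u v P S + Nf u v A S.
Proof.
move=> hA hP hu hv eAv ePu.
have eA : forall l, \sum_j A l j * v j 0 = v l 0.
  by move=> l; rewrite -{2}eAv mxE.
have eP : forall l, \sum_i P i l * u i 0 = u l 0.
  by move=> l; rewrite -{2}ePu mxE; apply: eq_bigr => i _; rewrite mxE.
have T0 : forall i l j, 0 <= u i 0 * P i l * A l j * v j 0.
  move=> i l j; apply: mulr_ge0; last exact: ltW.
  apply: mulr_ge0 => //; apply: mulr_ge0 => //; exact: ltW.
rewrite /Nf.
have -> : \sum_(i in S) \sum_(j in ~: S) u i 0 * (P *m A) i j * v j 0 =
  \sum_(i in S) \sum_(j in ~: S) (\sum_(l in S) u i 0 * P i l * A l j * v j 0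
     + \sum_(l in ~: S) u i 0 * P i l * A l j * v j 0).
  apply: eq_bigr => i _; apply: eq_bigr => j _.
  rewrite mxE big_distrr big_distrl /= (bigID (fun l => l \in S)) /=.
  congr (_ + _); apply: eq_big => [l|l _]; rewrite ?in_setC ?mulrA //.
rewrite [X in _ <= X]addrC.
under eq_bigr do rewrite big_split /=.
rewrite big_split /= lerD //.
- apply: le_trans; first apply: (sum_drop (fun i => i \in S)).
    by move=> i; apply: sumr_ge0 => j _; apply: sumr_ge0 => l _; exact: T0.
  rewrite exchange_big /=.
  under eq_bigr do rewrite exchange_big /=.
  rewrite exchange_big /=.
  apply: ler_sum => l _; apply: ler_sum => j _.
  rewrite -(eP l) !big_distrl /= le_eqVlt; apply/orP; left.
  by apply/eqP; apply: eq_bigr => i _; rewrite [u i 0 * _]mulrC.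
-
    apply: ler_sum => i _.
  rewrite exchange_big /=.
  apply: ler_sum => l _.
  apply: le_trans; first apply: (sum_drop (fun j => j \in ~: S)).
   by move=> j; exact: T0.
  rewrite -[X in _ <= X * _]mulr1 -(eA l) big_distrr /= le_eqVlt; apply/orP; left.
  by apply/eqP; apply: eq_bigr => j _; rewrite mulr1 !mulrA.
Qed.
Lemma pow_props (R : realFieldType) (n : nat) (A : 'M[R]_n) (u v : 'cV[R]_n) k :
  nonneg_mx A -> A *m v = v -> A^T *m u = u ->
  [/\ nonneg_mx (A ^+ k), A ^+ k *m v = v & (A ^+ k)^T *m u = u].
Proof.
move=> hA hv hu; elim: k => [|k [IH1 IH2 IH3]].
  rewrite expr0; split.
  - by move=> i j; rewrite mxE ler0n.
  - exact: mul1mx.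
  - by rewrite trmx1 mul1mx.
rewrite exprSr -mulmxE; split.
- move=> i j; rewrite mxE; apply: sumr_ge0 => l _; exact: mulr_ge0.
- by rewrite -mulmxA hv.
- by rewrite trmx_mul -mulmxA IH3.
Qed.

Lemma Nk (R : realFieldType) (n : nat) (A : 'M[R]_n) (u v : 'cV[R]_n) S k :
  nonneg_mx A -> pos_vec u -> pos_vec v -> A *m v = v -> A^T *m u = u ->
  Nf u v (A ^+ k.+1) S <= k.+1%:R * Nf u v A S.
Proof.
move=> hA hu hv eAv eAu; elim: k => [|k IH]; first by rewrite expr1 mul1r.
have [h1 h2 h3] := @pow_props _ _ A u v k.+1 hA eAv eAu.
rewrite exprSr -mulmxE.
apply: le_trans; first exact: (@key _ _ A (A ^+ k.+1) u v S hA h1 hu hv eAv h3).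
rewrite [k.+2%:R]mulrSr mulrDl mul1r; exact: lerD.
Qed.

Lemma denom (R : realFieldType) (n : nat) (M : 'M[R]_n) (u v : 'cV[R]_n) (S : {set 'I_n}) :
  M *m v = v ->
  \sum_(i in S) \sum_j u i 0 * M i j * v j 0 = \sum_(i in S) u i 0 * v i 0.
Proof.
move=> hv; apply: eq_bigr => i _.
rewrite -{2}hv mxE big_distrr /=; apply: eq_bigr => j _; by rewrite mulrA.
Qed.

Lemma phiS_le (R : realFieldType) (n : nat) (A : 'M[R]_n) (u v : 'cV[R]_n) S k :
  nonneg_mx A -> pos_vec u -> pos_vec v -> A *m v = v -> A^T *m u = u ->
  admissible u v S ->
  phiS u v (A ^+ k.+1) S <= k.+1%:R * phiS u v A S.
Proof.
move=> hA hu hv eAv eAu /andP[hS _].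
have [h1 h2 h3] := @pow_props _ _ A u v k.+1 hA eAv eAu.
rewrite /phiS (@denom _ _ _ u v S h2) (@denom _ _ _ u v S eAv).
have -> : \sum_(i in S) \sum_(j in ~: S) u i 0 * (A ^+ k.+1) i j * v j 0 =
   Nf u v (A ^+ k.+1) S by [].
have -> : \sum_(i in S) \sum_(j in ~: S) u i 0 * A i j * v j 0 =
   Nf u v A S by [].
rewrite mulrA; apply: ler_wpM2r; last exact: Nk.
rewrite invr_ge0; apply: sumr_ge0 => i _; apply: mulr_ge0; exact: ltW.
Qed.

Theorem lemma3p13 (R : realFieldType) (n : nat) (A : 'M[R]_n) (u v : 'cV[R]_n) :
  (1 < n)%N ->
  nonneg_mx A -> irreducible_mx A ->
  pos_vec u -> pos_vec v ->
  A *m v = v -> A^T *m u = u ->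
  forall k : nat, (0 < k)%N ->
  phi u v (A ^+ k) <= k%:R * phi u v A.
Proof.
move=> _ hA _ hu hv eAv eAu [//|k] _.
rewrite /phi; case: pickP => [S0 hS0|_]; last by rewrite mulr0.
apply: (big_ind2 (fun a b => a <= k.+1%:R * b)).
- exact: phiS_le.
- move=> x1 x2 y1 y2 h1 h2.
  have [hle|hlt] := leP x2 y2.
  + by rewrite ge_min h1.
  + by rewrite ge_min h2 orbT.
- move=> S hS; exact: phiS_le.
Qed.
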